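(* Let $X\in\mathbb{R}^{n\times p}$, $y\in\mathbb{R}^n$, $\lambda>0$, $\alpha>0$, $G=X^\top X+\alpha I_p$, $\tilde y=X^\top y$. Define $F:\mathbb{R}^{2p}\to\mathbb{R}^{2p}$ for $z=(\beta,d)\in\mathbb{R}^p\times\mathbb{R}^p$ by $$F(z)=\begin{pmatrix}\beta-T_\lambda(\beta+d)\\ G\beta+nd-\tilde y\end{pmatrix}.$$ For $w=(\beta,d)$ let $A(w)=\{i:|\beta_i+d_i|\ge\lambda\}$, let $D_w=\operatorname{diag}(\mathbf 1_{\{i\in A(w)\}})_{i=1}^p$, and define the $2p\times2p$ matrix (in $(\beta,d)$-block coordinates) $$H(w)=\begin{pmatrix} I_p-D_w & -D_w\\ G & nI_p\end{pmatrix}.$$ Then $F$ is Newton differentiable at every $z\in\mathbb{R}^{2p}$ with $H(w)$ as a Newton derivative, i.e. $\|F(z+h)-F(z)-H(z+h)h\|_2=o(\|h\|_2)$ as $h\to0$. Furthermore, for every $w$, $H(w)$ is invertible and $$\|H(w)^{-1}\|\le 1+\frac{2\,(n+1+\alpha+\|X\|^2)^2}{\alpha},$$ where $\|\cdot\|$ is the spectral (operator $2$-) norm.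
   Context: $T_\lambda$ is the componentwise soft-threshold operator $T_\lambda(x)_i=\operatorname{sgn}(x_i)\max(|x_i|-\lambda,0)$. Newton differentiability of $F:\mathbb{R}^m\to\mathbb{R}^l$ at $x$: there exist an open neighborhood $N(x)$ and a family $D:N(x)\to\mathbb{R}^{l\times m}$ with $\|F(x+h)-F(x)-D(x+h)h\|_2=o(\|h\|_2)$. (In the coordinate ordering $(d_A,\beta_B,\beta_A,d_B)$ with $A=A(w)$, $B$ its complement, $H(w)$ is the block matrix with rows $[-I_{AA},0,0,0]$, $[0,I_{BB},0,0]$, $[nI_{AA},X_A^\top X_B,G_{AA},0]$, $[0,G_{BB},X_B^\top X_A,nI_{BB}]$.) *)

(* Defs.v *)
(* Vectors in R^k are functions nat -> R of
   which only the entries 0..k-1 are relevant; matrices are nat -> nat -> R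
   of which only the entries (i,j) with i < rows, j < cols are relevant.    *)
From Stdlib Require Import Reals Lra Lia ClassicalEpsilon.
Open Scope R_scope.

Definition vec := nat -> R.
Definition mat := nat -> nat -> R.

Fixpoint rsum (k : nat) (f : nat -> R) : R :=
  match k with
  | O => 0
  | S k' => rsum k' f + f k'
  end.

Definition vadd (x y : vec) : vec := fun i => x i + y i.
Definition vsub (x y : vec) : vec := fun i => x i - y i.

Definition mv (cols : nat) (A : mat) (x : vec) : vec :=
  fun i => rsum cols (fun j => A i j * x j).

Definition mm (k : nat) (A B : mat) : mat :=
  fun i l => rsum k (fun j => A i j * B j l).

Definition idm : mat := fun i j => if Nat.eqb i j then 1 else 0.

Definition norm2 (k : nat) (x : vec) : R := sqrt (rsum k (fun i => x i ^ 2)).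

(* Spectral (operator 2-) norm of a rows x cols matrix:
   sup { ||A x||_2 : ||x||_2 <= 1 }  (the sup exists; chosen by epsilon). *)
Definition opnorm (rows cols : nat) (A : mat) : R :=
  epsilon (inhabits 0)
    (is_lub (fun r => exists x : vec, norm2 cols x <= 1 /\ r = norm2 rows (mv cols A x))).

Definition is_inverse (k : nat) (A B : mat) : Prop :=
  forall i j, (i < k)%nat -> (j < k)%nat ->
    mm k A B i j = idm i j /\ mm k B A i j = idm i j.

Definition sgn (x : R) : R :=
  if Rlt_dec 0 x then 1 else if Rlt_dec x 0 then -1 else 0.
Definition soft (lam x : R) : R := sgn x * Rmax (Rabs x - lam) 0.

(* Newton differentiability of F : R^m -> R^l at x with Newton derivative D
   (D defined on all of R^m, so the neighbourhood N(x) is R^m):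
   ||F(x+h) - F(x) - D(x+h) h||_2 = o(||h||_2) as h -> 0. *)
Definition newton_diff (m l : nat) (F : vec -> vec) (D : vec -> mat) (x : vec) : Prop :=
  forall eps, eps > 0 -> exists delta, delta > 0 /\
    forall h : vec, norm2 m h < delta ->
      norm2 l (vsub (vsub (F (vadd x h)) (F x)) (mv m (D (vadd x h)) h))
        <= eps * norm2 m h.

(* Problem data: X is n x p, y in R^n. *)
Definition Gm (n : nat) (X : mat) (alpha : R) : mat :=
  fun i j => rsum n (fun k => X k i * X k j) + alpha * idm i j.
Definition ytil (n : nat) (X : mat) (y : vec) : vec :=
  fun j => rsum n (fun k => X k j * y k).

(* z in R^{2p} encodes (beta, d): beta_i = z i, d_i = z (p + i)%nat, i < p. *)
Definition Fmap (n p : nat) (X : mat) (y : vec) (lam alpha : R) (z : vec) : vec :=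
  fun i =>
    if Nat.ltb i p then z i - soft lam (z i + z (p + i)%nat)
    else let j := (i - p)%nat in
      mv p (Gm n X alpha) z j + INR n * z (p + j)%nat - ytil n X y j.

Definition actv (p : nat) (lam : R) (w : vec) (i : nat) : R :=
  if Rle_dec lam (Rabs (w i + w (p + i)%nat)) then 1 else 0.

Definition Hmat (n p : nat) (X : mat) (lam alpha : R) (w : vec) : mat :=
  fun i j =>
    if Nat.ltb i p then
      (if Nat.ltb j p then idm i j * (1 - actv p lam w i)
       else - (idm i (j - p)%nat * actv p lam w i))
    else
      (if Nat.ltb j p then Gm n X alpha (i - p)%nat j
       else INR n * idm (i - p)%nat (j - p)%nat).

(* Main.v *)
Require Import Defs.
From Stdlib Require Import Reals Lra Lia ClassicalEpsilon.
Open Scope R_scope.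

Lemma rsum_S k f : rsum (S k) f = rsum k f + f k.
Proof. reflexivity. Qed.

Lemma rsum_ext k f g : (forall i, (i < k)%nat -> f i = g i) -> rsum k f = rsum k g.
Proof.
  induction k; intros H; simpl; auto.
  rewrite IHk by (intros; apply H; lia). rewrite H by lia. reflexivity.
Qed.

Lemma rsum_plus k f g : rsum k (fun i => f i + g i) = rsum k f + rsum k g.
Proof. induction k; simpl; [lra | rewrite IHk; lra]. Qed.

Lemma rsum_scal k c f : rsum k (fun i => c * f i) = c * rsum k f.
Proof. induction k; simpl; [lra | rewrite IHk; lra]. Qed.

Lemma rsum_zero k f : (forall i, (i < k)%nat -> f i = 0) -> rsum k f = 0.
Proof.
  intros H. rewrite (rsum_ext k f (fun _ => 0)) by auto.
  clear H; induction k; simpl; [lra | rewrite IHk; lra].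
Qed.

Lemma rsum_le k f g : (forall i, (i < k)%nat -> f i <= g i) -> rsum k f <= rsum k g.
Proof.
  induction k; intros H; simpl; [lra|].
  assert (rsum k f <= rsum k g) by (apply IHk; intros; apply H; lia).
  assert (f k <= g k) by (apply H; lia). lra.
Qed.

Lemma rsum_nonneg k f : (forall i, (i < k)%nat -> 0 <= f i) -> 0 <= rsum k f.
Proof.
  intros H. replace 0 with (rsum k (fun _ => 0)) by (apply rsum_zero; auto).
  apply rsum_le; auto.
Qed.

Lemma rsum_term k f i : (forall j, (j < k)%nat -> 0 <= f j) -> (i < k)%nat -> f i <= rsum k f.
Proof.
  induction k; intros H Hi; [lia|]. simpl.
  destruct (Nat.eq_dec i k) as [->|Hne].
  - assert (0 <= rsum k f) by (apply rsum_nonneg; intros; apply H; lia). lra.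
  - assert (f i <= rsum k f) by (apply IHk; [intros; apply H|]; lia).
    assert (0 <= f k) by (apply H; lia). lra.
Qed.

Lemma rsum_split a b f : rsum (a + b) f = rsum a f + rsum b (fun i => f (a + i)%nat).
Proof.
  induction b; simpl.
  - rewrite Nat.add_0_r. lra.
  - rewrite Nat.add_succ_r. simpl. rewrite IHb. lra.
Qed.

Lemma rsum_swap m k (f : nat -> nat -> R) :
  rsum m (fun i => rsum k (fun j => f i j)) = rsum k (fun j => rsum m (fun i => f i j)).
Proof.
  induction m; simpl.
  - symmetry; apply rsum_zero; auto.
  - rewrite IHm. rewrite <- rsum_plus. reflexivity.
Qed.

Lemma rsum_idm k i c : (i < k)%nat -> rsum k (fun j => idm i j * c j) = c i.
Proof.
  induction k; intros Hi; [lia|]. simpl.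
  destruct (Nat.eq_dec i k) as [->|Hne].
  - rewrite rsum_zero. unfold idm; rewrite Nat.eqb_refl; lra.
    intros j Hj. unfold idm. destruct (Nat.eqb_spec k j); [lia|lra].
  - rewrite IHk by lia. unfold idm. destruct (Nat.eqb_spec i k); [lia|lra].
Qed.

Definition nsq k (x : vec) := rsum k (fun i => x i ^ 2).
Definition dot k (x y : vec) := rsum k (fun i => x i * y i).

Lemma nsq_nonneg k x : 0 <= nsq k x.
Proof. apply rsum_nonneg; intros; apply pow2_ge_0. Qed.

Lemma norm2_nsq k x : norm2 k x = sqrt (nsq k x).
Proof. reflexivity. Qed.

Lemma norm2_nonneg k x : 0 <= norm2 k x.
Proof. apply sqrt_pos. Qed.

Lemma norm2_sq k x : norm2 k x * norm2 k x = nsq k x.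
Proof. apply sqrt_sqrt, nsq_nonneg. Qed.

Lemma nsq_ext k x y : (forall i, (i < k)%nat -> x i = y i) -> nsq k x = nsq k y.
Proof. intros H; apply rsum_ext; intros; rewrite H; auto. Qed.

Lemma norm2_ext k x y : (forall i, (i < k)%nat -> x i = y i) -> norm2 k x = norm2 k y.
Proof. intros H; unfold norm2; f_equal; apply (nsq_ext k x y H). Qed.

Lemma nsq_zero k y : nsq k y = 0 -> forall i, (i < k)%nat -> y i = 0.
Proof.
  intros H i Hi.
  assert (y i ^ 2 <= nsq k y) by (apply (rsum_term k (fun i => y i ^ 2)); auto; intros; apply pow2_ge_0).
  assert (0 <= y i ^ 2) by apply pow2_ge_0. nra.
Qed.

Lemma sqrt_le_from a b : 0 <= b -> a <= b * b -> sqrt a <= b.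
Proof.
  intros Hb H. destruct (Rle_or_lt a 0).
  - rewrite sqrt_neg_0 by auto; auto.
  - rewrite <- (sqrt_square b) by auto. apply sqrt_le_1_alt. lra.
Qed.

Lemma CS_sq k x y : dot k x y ^ 2 <= nsq k x * nsq k y.
Proof.
  destruct (Req_dec (nsq k y) 0) as [H0|H0].
  - assert (dot k x y = 0).
    { apply rsum_zero. intros i Hi. rewrite (nsq_zero k y H0 i Hi). ring. }
    rewrite H, H0. lra.
  - assert (Hy : 0 < nsq k y) by (pose proof (nsq_nonneg k y); lra).
    set (t := dot k x y / nsq k y).
    assert (E : nsq k (fun i => x i - t * y i) = nsq k x - 2 * t * dot k x y + t^2 * nsq k y).
    { unfold nsq, dot.
      rewrite (rsum_ext k _ (fun i => x i ^ 2 + ((- (2 * t)) * (x i * y i) + t ^ 2 * y i ^ 2)))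
        by (intros; ring).
      rewrite rsum_plus, rsum_plus, rsum_scal, rsum_scal. ring. }
    pose proof (nsq_nonneg k (fun i => x i - t * y i)).
    rewrite E in H. unfold t in H.
    assert (0 <= nsq k x - dot k x y ^ 2 / nsq k y).
    { replace (nsq k x - dot k x y ^ 2 / nsq k y) with
        (nsq k x - 2 * (dot k x y / nsq k y) * dot k x y + (dot k x y / nsq k y) ^ 2 * nsq k y)
        by (field; lra). auto. }
    assert (dot k x y ^ 2 / nsq k y <= nsq k x) by lra.
    apply (Rmult_le_compat_r (nsq k y)) in H2; [|lra].
    replace (dot k x y ^ 2 / nsq k y * nsq k y) with (dot k x y ^ 2) in H2 by (field; lra).
    lra.
Qed.

Lemma CS_abs k x y : Rabs (dot k x y) <= norm2 k x * norm2 k y.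
Proof.
  rewrite <- sqrt_Rsqr_abs. unfold norm2. rewrite <- sqrt_mult by apply nsq_nonneg.
  apply sqrt_le_1_alt. unfold Rsqr. pose proof (CS_sq k x y). simpl in H. fold (nsq k x) (nsq k y). nra.
Qed.

Lemma CS k x y : dot k x y <= norm2 k x * norm2 k y.
Proof. pose proof (CS_abs k x y). pose proof (Rle_abs (dot k x y)). lra. Qed.

Lemma dot_sym k x y : dot k x y = dot k y x.
Proof. apply rsum_ext; intros; ring. Qed.

Lemma nsq_plus k x y : nsq k (fun i => x i + y i) = nsq k x + 2 * dot k x y + nsq k y.
Proof.
  unfold nsq, dot.
  rewrite (rsum_ext k _ (fun i => x i ^ 2 + (2 * (x i * y i) + y i ^ 2))) by (intros; ring).
  rewrite rsum_plus, rsum_plus, rsum_scal. ring.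
Qed.

Lemma norm2_triangle k x y : norm2 k (fun i => x i + y i) <= norm2 k x + norm2 k y.
Proof.
  rewrite (norm2_nsq k (fun i => x i + y i)). apply sqrt_le_from.
  - pose proof (norm2_nonneg k x); pose proof (norm2_nonneg k y); lra.
  - rewrite nsq_plus. pose proof (CS k x y). rewrite <- (norm2_sq k x), <- (norm2_sq k y). nra.
Qed.

Lemma norm2_scal k c x : norm2 k (fun i => c * x i) = Rabs c * norm2 k x.
Proof.
  unfold norm2, nsq. rewrite (rsum_ext k _ (fun i => c ^ 2 * x i ^ 2)) by (intros; ring).
  rewrite rsum_scal. rewrite sqrt_mult by (try apply pow2_ge_0; apply rsum_nonneg; intros; apply pow2_ge_0).
  f_equal. rewrite <- sqrt_Rsqr_abs. unfold Rsqr. f_equal. ring.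
Qed.

Lemma norm2_opp k x : norm2 k (fun i => - x i) = norm2 k x.
Proof.
  rewrite (norm2_ext k _ (fun i => -1 * x i)) by (intros; ring).
  rewrite norm2_scal. rewrite Rabs_left by lra. ring.
Qed.

Lemma norm2_minus k x y : norm2 k (fun i => x i - y i) <= norm2 k x + norm2 k y.
Proof.
  rewrite (norm2_ext k _ (fun i => x i + - y i)) by (intros; ring).
  rewrite <- (norm2_opp k y). apply (norm2_triangle k x (fun i => - y i)).
Qed.

Lemma norm2_le k x y : (forall i, (i < k)%nat -> x i ^ 2 <= y i ^ 2) -> norm2 k x <= norm2 k y.
Proof. intros H. apply sqrt_le_1_alt. apply rsum_le. auto. Qed.

Lemma comp_le k x i : (i < k)%nat -> Rabs (x i) <= norm2 k x.
Proof.
  intros Hi. rewrite <- sqrt_Rsqr_abs. apply sqrt_le_1_alt.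
  unfold Rsqr. replace (x i * x i) with (x i ^ 2) by ring.
  apply (rsum_term k (fun i => x i ^ 2)); auto. intros; apply pow2_ge_0.
Qed.

Lemma mv_ext cols A x y : (forall j, (j < cols)%nat -> x j = y j) -> forall i, mv cols A x i = mv cols A y i.
Proof. intros H i. apply rsum_ext. intros; rewrite H; auto. Qed.

Lemma opnorm_lub rows cols A C :
  (forall x, norm2 cols x <= 1 -> norm2 rows (mv cols A x) <= C) ->
  is_lub (fun r => exists x : vec, norm2 cols x <= 1 /\ r = norm2 rows (mv cols A x))
         (opnorm rows cols A).
Proof.
  intros H. unfold opnorm. apply epsilon_spec.
  destruct (completeness (fun r => exists x : vec, norm2 cols x <= 1 /\ r = norm2 rows (mv cols A x))) as [m Hm].
  - exists C. intros r [x [Hx ->]]. apply H; auto.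
  - exists (norm2 rows (mv cols A (fun _ => 0))). exists (fun _ => 0). split; auto.
    unfold norm2, nsq. rewrite rsum_zero by (intros; simpl; ring). rewrite sqrt_0; lra.
  - exists m; auto.
Qed.

Lemma opnorm_le rows cols A C :
  (forall x, norm2 cols x <= 1 -> norm2 rows (mv cols A x) <= C) -> opnorm rows cols A <= C.
Proof.
  intros H. destruct (opnorm_lub rows cols A C H) as [_ Hl]. apply Hl.
  intros r [x [Hx ->]]. auto.
Qed.

Lemma mv_scal cols A c x i : mv cols A (fun j => c * x j) i = c * mv cols A x i.
Proof. unfold mv. rewrite <- rsum_scal. apply rsum_ext; intros; ring. Qed.

Lemma opnorm_bound rows cols A :
  (exists C, forall x, norm2 cols x <= 1 -> norm2 rows (mv cols A x) <= C) ->
  0 <= opnorm rows cols A /\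
  forall x, norm2 rows (mv cols A x) <= opnorm rows cols A * norm2 cols x.
Proof.
  intros [C H]. destruct (opnorm_lub rows cols A C H) as [Hub _].
  assert (H0 : 0 <= opnorm rows cols A).
  { apply Hub. exists (fun _ => 0). split.
    - unfold norm2, nsq. rewrite rsum_zero by (intros; simpl; ring). rewrite sqrt_0; lra.
    - unfold norm2, nsq. rewrite rsum_zero. rewrite sqrt_0; lra.
      intros i _. unfold mv. rewrite rsum_zero by (intros; ring). simpl; ring. }
  split; auto. intros x.
  destruct (Req_dec (norm2 cols x) 0) as [Hz|Hz].
  - rewrite Hz. unfold norm2 in Hz. apply sqrt_eq_0 in Hz; [|apply nsq_nonneg].
    unfold norm2, nsq. rewrite rsum_zero. rewrite sqrt_0; lra.
    intros i _. unfold mv. rewrite rsum_zero. simpl; ring.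
    intros j Hj. rewrite (nsq_zero cols x Hz j Hj). ring.
  - assert (Hp : 0 < norm2 cols x) by (pose proof (norm2_nonneg cols x); lra).
    set (c := / norm2 cols x).
    assert (Hc : 0 < c) by (apply Rinv_0_lt_compat; auto).
    assert (Hin : norm2 rows (mv cols A (fun j => c * x j)) <= opnorm rows cols A).
    { apply Hub. exists (fun j => c * x j). split; auto.
      rewrite norm2_scal, Rabs_right by lra. unfold c. rewrite Rinv_l; lra. }
    rewrite (norm2_ext rows _ (fun i => c * mv cols A x i)) in Hin by (intros; apply mv_scal).
    rewrite norm2_scal, Rabs_right in Hin by lra.
    unfold c in Hin. apply (Rmult_le_compat_r (norm2 cols x)) in Hin; [|lra].
    replace (/ norm2 cols x * norm2 rows (mv cols A x) * norm2 cols x) with (norm2 rows (mv cols A x)) in Hin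
      by (field; lra). auto.
Qed.

Lemma frob_bound rows cols A :
  exists C, forall x, norm2 cols x <= 1 -> norm2 rows (mv cols A x) <= C.
Proof.
  exists (sqrt (rsum rows (fun k => nsq cols (A k)))). intros x Hx.
  apply sqrt_le_1_alt. change (rsum rows (fun k => mv cols A x k ^ 2) <= rsum rows (fun k => nsq cols (A k))).
  apply Rle_trans with (rsum rows (fun k => nsq cols (A k) * nsq cols x)).
  - apply rsum_le. intros k _. apply (CS_sq cols (A k) x).
  - rewrite (rsum_ext rows _ (fun k => nsq cols x * nsq cols (A k))) by (intros; ring).
    rewrite rsum_scal.
    assert (nsq cols x <= 1).
    { rewrite <- (norm2_sq cols x). pose proof (norm2_nonneg cols x). nra. }
    assert (0 <= rsum rows (fun k => nsq cols (A k))) by (apply rsum_nonneg; intros; apply nsq_nonneg).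
    pose proof (nsq_nonneg cols x). nra.
Qed.

Lemma opnorm_prop rows cols A :
  0 <= opnorm rows cols A /\
  forall x, norm2 rows (mv cols A x) <= opnorm rows cols A * norm2 cols x.
Proof. apply opnorm_bound, frob_bound. Qed.

Definition Xt (n : nat) (X : mat) (y : vec) : vec := fun i => rsum n (fun k => X k i * y k).

Lemma adj n p X x y : dot p x (Xt n X y) = dot n (mv p X x) y.
Proof.
  unfold dot, Xt, mv.
  rewrite (rsum_ext p _ (fun i => rsum n (fun k => x i * X k i * y k)))
    by (intros; rewrite <- rsum_scal; apply rsum_ext; intros; ring).
  rewrite rsum_swap. apply rsum_ext. intros k _.
  rewrite Rmult_comm, <- rsum_scal. apply rsum_ext; intros; ring.
Qed.

Lemma Xt_bound n p X y : norm2 p (Xt n X y) <= opnorm n p X * norm2 n y.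
Proof.
  destruct (opnorm_prop n p X) as [H0 H].
  set (u := Xt n X y).
  assert (E : norm2 p u * norm2 p u <= opnorm n p X * norm2 p u * norm2 n y).
  { rewrite norm2_sq. unfold nsq. replace (rsum p (fun i => u i ^ 2)) with (dot p u u)
      by (apply rsum_ext; intros; ring).
    unfold u at 2. rewrite adj.
    eapply Rle_trans; [apply CS|]. apply Rmult_le_compat_r; [apply norm2_nonneg| apply H]. }
  pose proof (norm2_nonneg p u). pose proof (norm2_nonneg n y).
  destruct (Req_dec (norm2 p u) 0) as [Hz|Hz]; [rewrite Hz; nra|].
  assert (0 < norm2 p u) by lra.
  apply (Rmult_le_reg_l (norm2 p u)); auto. nra.
Qed.

Lemma G_decomp n p X alpha x i : (i < p)%nat ->
  mv p (Gm n X alpha) x i = Xt n X (mv p X x) i + alpha * x i.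
Proof.
  intros Hi. unfold mv, Gm, Xt.
  rewrite (rsum_ext p _ (fun j => rsum n (fun k => X k i * X k j * x j) + alpha * (idm i j * x j)))
    by (intros; rewrite Rmult_plus_distr_r; f_equal;
        [rewrite Rmult_comm, <- rsum_scal; apply rsum_ext; intros; ring | ring]).
  rewrite rsum_plus, rsum_scal, rsum_idm by auto. f_equal.
  rewrite rsum_swap. apply rsum_ext. intros k _. rewrite <- rsum_scal. apply rsum_ext; intros; ring.
Qed.

Lemma G_pos n p X alpha x : alpha * nsq p x <= dot p x (mv p (Gm n X alpha) x).
Proof.
  unfold dot at 1.
  rewrite (rsum_ext p _ (fun i => x i * Xt n X (mv p X x) i + alpha * (x i ^ 2)))
    by (intros; rewrite G_decomp by auto; ring).
  rewrite rsum_plus, rsum_scal. fold (dot p x (Xt n X (mv p X x))). rewrite adj.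
  fold (nsq p x).
  assert (0 <= dot n (mv p X x) (mv p X x)) by (apply rsum_nonneg; intros; nra).
  lra.
Qed.

Lemma G_bound n p X alpha x : alpha > 0 ->
  norm2 p (mv p (Gm n X alpha) x) <= (opnorm n p X ^ 2 + alpha) * norm2 p x.
Proof.
  intros Ha. destruct (opnorm_prop n p X) as [H0 H].
  rewrite (norm2_ext p _ (fun i => Xt n X (mv p X x) i + alpha * x i)) by (intros; apply G_decomp; auto).
  eapply Rle_trans; [apply norm2_triangle|].
  rewrite norm2_scal, Rabs_right by lra.
  pose proof (Xt_bound n p X (mv p X x)). pose proof (H x).
  pose proof (norm2_nonneg p x). pose proof (norm2_nonneg n (mv p X x)).
  simpl. nra.
Qed.

Lemma rsum_minus k f g : rsum k (fun i => f i - g i) = rsum k f - rsum k g.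
Proof. induction k; simpl; [lra | rewrite IHk; lra]. Qed.

Lemma two_p p : (2 * p = p + p)%nat.
Proof. lia. Qed.

Lemma nsq_split p x : nsq (2 * p) x = nsq p x + nsq p (fun i => x (p + i)%nat).
Proof. unfold nsq. rewrite two_p, rsum_split. reflexivity. Qed.

Lemma ltb_t i p : (i < p)%nat -> Nat.ltb i p = true.
Proof. apply Nat.ltb_lt. Qed.
Lemma ltb_f i p : Nat.ltb (p + i) p = false.
Proof. apply Nat.ltb_ge. lia. Qed.
Lemma sub_pp p i : (p + i - p = i)%nat.
Proof. lia. Qed.

Lemma Hv_top n p X lam alpha w v i : (i < p)%nat ->
  mv (2 * p) (Hmat n p X lam alpha w) v i =
  (1 - actv p lam w i) * v i - actv p lam w i * v (p + i)%nat.
Proof.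
  intros Hi. unfold mv. rewrite two_p, rsum_split.
  rewrite (rsum_ext p _ (fun j => idm i j * ((1 - actv p lam w i) * v j))).
  2:{ intros j Hj. unfold Hmat. rewrite (ltb_t i p Hi), (ltb_t j p Hj). ring. }
  rewrite (rsum_ext p (fun j => Hmat n p X lam alpha w i (p + j)%nat * v (p + j)%nat) (fun j => idm i j * (- actv p lam w i * v (p + j)%nat))).
  2:{ intros j Hj. unfold Hmat. rewrite (ltb_t i p Hi), ltb_f, sub_pp. ring. }
  rewrite !rsum_idm by auto. ring.
Qed.

Lemma Hv_bot n p X lam alpha w v i : (i < p)%nat ->
  mv (2 * p) (Hmat n p X lam alpha w) v (p + i)%nat =
  mv p (Gm n X alpha) v i + INR n * v (p + i)%nat.
Proof.
  intros Hi. unfold mv. rewrite two_p, rsum_split.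
  rewrite (rsum_ext p (fun j => Hmat n p X lam alpha w (p + i)%nat j * v j)
             (fun j => Gm n X alpha i j * v j)).
  2:{ intros j Hj. unfold Hmat. rewrite ltb_f, (ltb_t j p Hj), sub_pp. ring. }
  rewrite (rsum_ext p (fun j => Hmat n p X lam alpha w (p + i)%nat (p + j)%nat * v (p + j)%nat) (fun j => idm i j * (INR n * v (p + j)%nat))).
  2:{ intros j Hj. unfold Hmat. rewrite ltb_f, ltb_f, !sub_pp. ring. }
  rewrite rsum_idm by auto. ring.
Qed.

Lemma actv01 p lam w i : actv p lam w i = 0 \/ actv p lam w i = 1.
Proof. unfold actv. destruct (Rle_dec _ _); auto. Qed.

Lemma coercive n p X lam alpha w v : (0 < n)%nat -> alpha > 0 ->
  norm2 (2 * p) v <= (1 + 2 * (INR n + 1 + alpha + opnorm n p X ^ 2) ^ 2 / alpha)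
                     * norm2 (2 * p) (mv (2 * p) (Hmat n p X lam alpha w) v).
Proof.
  intros Hn Ha.
  assert (Hn1 : 1 <= INR n) by (apply (le_INR 1 n); lia).
  set (d := actv p lam w).
  assert (Hd : forall i, d i = 0 \/ d i = 1) by (intros; apply actv01).
  set (G := Gm n X alpha).
  destruct (opnorm_prop n p X) as [HN0 _].
  set (N := opnorm n p X) in *.
  set (g := N ^ 2 + alpha).
  set (K := INR n + 1 + alpha + N ^ 2).
  set (r := fun i => (1 - d i) * v i - d i * v (p + i)%nat).
  set (s := fun i => mv p G v i + INR n * v (p + i)%nat).
  set (T := norm2 (2 * p) (mv (2 * p) (Hmat n p X lam alpha w) v)).
  assert (HT : nsq (2 * p) (mv (2 * p) (Hmat n p X lam alpha w) v) = nsq p r + nsq p s).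
  { rewrite nsq_split. f_equal; apply nsq_ext; intros i Hi.
    - rewrite Hv_top by auto. reflexivity.
    - rewrite Hv_bot by auto. reflexivity. }
  set (R := norm2 p r). set (S := norm2 p s).
  assert (HR0 : 0 <= R) by apply norm2_nonneg. assert (HS0 : 0 <= S) by apply norm2_nonneg.
  assert (HR : R <= T).
  { unfold R, T. rewrite !norm2_nsq, HT. apply sqrt_le_1_alt. pose proof (nsq_nonneg p s). lra. }
  assert (HS : S <= T).
  { unfold S, T. rewrite !norm2_nsq, HT. apply sqrt_le_1_alt. pose proof (nsq_nonneg p r). lra. }
  set (q := fun i => d i * v i).
  set (e := fun i => (1 - d i) * v i).
  set (f := fun i => d i * v (p + i)%nat).
  set (gb := fun i => (1 - d i) * v (p + i)%nat).
  assert (Hrf : nsq p r = nsq p e + nsq p f).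
  { unfold nsq. rewrite <- rsum_plus. apply rsum_ext. intros i _.
    unfold r, e, f. destruct (Hd i) as [-> | ->]; ring. }
  assert (He : norm2 p e <= R).
  { unfold R. rewrite !norm2_nsq. apply sqrt_le_1_alt. rewrite Hrf. pose proof (nsq_nonneg p f). lra. }
  assert (Hf : norm2 p f <= R).
  { unfold R. rewrite !norm2_nsq. apply sqrt_le_1_alt. rewrite Hrf. pose proof (nsq_nonneg p e). lra. }
  assert (Hv2 : nsq (2 * p) v = nsq p q + nsq p e + nsq p f + nsq p gb).
  { rewrite nsq_split. unfold nsq. rewrite <- !rsum_plus.
    apply rsum_ext. intros i _. unfold q, e, f, gb. destruct (Hd i) as [-> | ->]; ring. }
  assert (HGv : forall i, mv p G v i = mv p G q i + mv p G e i).
  { intros i. unfold mv. rewrite <- rsum_plus. apply rsum_ext. intros j _. unfold q, e. ring. }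
  assert (Hdot : dot p q (mv p G q) = dot p q s - dot p q (mv p G e) - INR n * dot p q f).
  { unfold dot. rewrite <- rsum_scal, <- !rsum_minus. apply rsum_ext. intros i _.
    unfold s. rewrite HGv. unfold q, f. destruct (Hd i) as [-> | ->]; ring. }
  set (Q := norm2 p q).
  assert (HQ0 : 0 <= Q) by apply norm2_nonneg.
  assert (HGe : norm2 p (mv p G e) <= g * R).
  { eapply Rle_trans; [apply G_bound; auto|]. fold N g.
    apply Rmult_le_compat_l; auto. unfold g. pose proof (pow2_ge_0 N); lra. }
  assert (Hg0 : 0 <= g) by (unfold g; pose proof (pow2_ge_0 N); lra).
  assert (HQa : alpha * Q <= S + g * R + INR n * R).
  { assert (H1 : alpha * (Q * Q) <= Q * (S + g * R + INR n * R)).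
    { assert (HQQ : Q * Q = nsq p q) by apply norm2_sq. rewrite HQQ.
      apply (Rle_trans _ _ _ (G_pos n p X alpha q)). fold G. rewrite Hdot.
      assert (H3 : Rabs (dot p q s) <= Q * S) by apply CS_abs.
      assert (H4 : Rabs (dot p q (mv p G e)) <= Q * norm2 p (mv p G e)) by apply CS_abs.
      assert (H5 : Rabs (dot p q f) <= Q * norm2 p f) by apply CS_abs.
      pose proof (Rle_abs (dot p q s)).
      pose proof (Rle_abs (- dot p q (mv p G e))).
      pose proof (Rle_abs (- dot p q f)). rewrite Rabs_Ropp in H0, H1.
      pose proof (norm2_nonneg p f). pose proof (norm2_nonneg p (mv p G e)).
      assert (Q * norm2 p (mv p G e) <= Q * (g * R)) by (apply Rmult_le_compat_l; auto).
      assert (Q * norm2 p f <= Q * R) by (apply Rmult_le_compat_l; auto).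
      assert (INR n * (- dot p q f) <= INR n * (Q * R)) by (apply Rmult_le_compat_l; lra).
      nra. }
    destruct (Req_dec Q 0) as [Hz|Hz].
    - rewrite Hz.
      assert (0 <= g * R) by (apply Rmult_le_pos; auto).
      assert (0 <= INR n * R) by (apply Rmult_le_pos; lra). lra.
    - apply (Rmult_le_reg_l Q); [lra|]. nra. }
  assert (HK : S + g * R + INR n * R <= K * T).
  { unfold K. assert (g * R <= g * T) by (apply Rmult_le_compat_l; auto).
    assert (INR n * R <= INR n * T) by (apply Rmult_le_compat_l; lra).
    unfold g in *. lra. }
  assert (Hgb : norm2 p gb <= S + g * (Q + R)).
  { apply Rle_trans with (norm2 p (fun i => s i - mv p G v i)).
    - apply norm2_le. intros i _. unfold gb, s.
      replace (mv p G v i + INR n * v (p + i)%nat - mv p G v i) with (INR n * v (p + i)%nat) by ring.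
      destruct (Hd i) as [-> | ->]; [|simpl; nra].
      replace ((1 - 0) * v (p + i)%nat) with (v (p + i)%nat) by ring.
      rewrite Rpow_mult_distr. pose proof (pow2_ge_0 (v (p + i)%nat)).
      assert (1 <= INR n ^ 2) by (simpl; nra). nra.
    - eapply Rle_trans; [apply norm2_minus|]. fold S. apply Rplus_le_compat_l.
      eapply Rle_trans; [apply G_bound; auto|]. fold N g. apply Rmult_le_compat_l; auto.
      rewrite (norm2_ext p v (fun i => q i + e i)) by (intros; unfold q, e; ring).
      eapply Rle_trans; [apply norm2_triangle|]. fold Q. lra. }
  assert (Hv3 : norm2 (2 * p) v <= Q + R + norm2 p gb).
  { rewrite norm2_nsq, Hv2. apply sqrt_le_from.
    - pose proof (norm2_nonneg p gb). lra.
    - rewrite <- (norm2_sq p q), <- (norm2_sq p gb), <- (norm2_sq p e), <- (norm2_sq p f).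
      fold Q. pose proof (norm2_nonneg p gb).
      pose proof (norm2_nonneg p e). pose proof (norm2_nonneg p f).
      assert (norm2 p e * norm2 p e + norm2 p f * norm2 p f = R * R).
      { unfold R. rewrite !norm2_sq. auto. }
      nra. }
  assert (HK1 : 1 + g <= K) by (unfold K, g; pose proof (pos_INR n); lra).
  assert (HKa : alpha <= K) by (unfold K; pose proof (pos_INR n); pose proof (pow2_ge_0 N); lra).
  assert (HT0 : 0 <= T) by apply norm2_nonneg.
  assert (HQ : Q <= K * T / alpha).
  { apply (Rmult_le_reg_l alpha); auto. unfold Rdiv. rewrite <- Rmult_assoc.
    rewrite (Rmult_comm alpha (K * T)), Rmult_assoc, Rinv_r by lra. lra. }
  fold K. fold T.
  assert (HKK : K <= K ^ 2 / alpha).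
  { apply (Rmult_le_reg_l alpha); auto. replace (alpha * (K ^ 2 / alpha)) with (K * K) by (field; lra).
    apply Rmult_le_compat_r; lra. }
  assert (H1 : (1 + g) * (Q + R) <= K * (K * T / alpha) + K * T).
  { apply Rle_trans with (K * (Q + R)).
    - apply Rmult_le_compat_r; [lra | auto].
    - rewrite <- Rmult_plus_distr_l. apply Rmult_le_compat_l; lra. }
  assert (H2 : K * T <= K ^ 2 / alpha * T) by (apply Rmult_le_compat_r; auto).
  replace (K * (K * T / alpha)) with (K ^ 2 / alpha * T) in H1 by (field; lra).
  replace ((1 + 2 * K ^ 2 / alpha) * T) with (T + 2 * (K ^ 2 / alpha * T)) by (field; lra).
  lra.
Qed.

Ltac dall := repeat match goal with
  | |- context [Rcase_abs ?a] => destruct (Rcase_abs a)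
  | |- context [Rle_dec ?a ?b] => destruct (Rle_dec a b)
  | |- context [Rlt_dec ?a ?b] => destruct (Rlt_dec a b)
  | |- context [Req_EM_T ?a ?b] => destruct (Req_EM_T a b)
  | H : context [Rcase_abs ?a] |- _ => destruct (Rcase_abs a)
  | H : context [Req_EM_T ?a ?b] |- _ => destruct (Req_EM_T a b)
  end.

Lemma soft_eq lam x : lam > 0 -> soft lam x =
  (if Rlt_dec lam x then x - lam else if Rlt_dec x (- lam) then x + lam else 0).
Proof. intros Hl. unfold soft, sgn, Rmax, Rabs. dall; lra. Qed.

Definition sdel (lam u : R) : R :=
  if Req_EM_T (Rabs u) lam then lam else Rabs (Rabs u - lam).

Lemma sdel_pos lam u : lam > 0 -> 0 < sdel lam u.
Proof. intros Hl. unfold sdel, Rabs. dall; lra. Qed.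

Lemma soft_loc lam u v : lam > 0 -> Rabs (v - u) < sdel lam u ->
  soft lam v - soft lam u = (if Rle_dec lam (Rabs v) then 1 else 0) * (v - u).
Proof.
  intros Hl H. rewrite !soft_eq by auto. unfold sdel in H. unfold Rabs in *. dall; lra.
Qed.

Fixpoint mind (f : nat -> R) (k : nat) : R :=
  match k with O => 1 | S k' => Rmin (mind f k') (f k') end.

Lemma mind_pos f k : (forall i, 0 < f i) -> 0 < mind f k.
Proof. intros H. induction k; simpl; [lra|]. apply Rmin_glb_lt; auto. Qed.

Lemma mind_le f k i : (i < k)%nat -> mind f k <= f i.
Proof.
  induction k; intros Hi; [lia|]. simpl.
  destruct (Nat.eq_dec i k) as [->|Hne]; [apply Rmin_r|].
  eapply Rle_trans; [apply Rmin_l|]. apply IHk; lia.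
Qed.

Lemma mv_add cols A x y i : mv cols A (vadd x y) i = mv cols A x i + mv cols A y i.
Proof. unfold mv. rewrite <- rsum_plus. apply rsum_ext. intros; unfold vadd; ring. Qed.

Lemma newton n p X y lam alpha z : lam > 0 ->
  newton_diff (2 * p) (2 * p) (Fmap n p X y lam alpha) (Hmat n p X lam alpha) z.
Proof.
  intros Hl eps Heps.
  set (del := fun i => sdel lam (z i + z (p + i)%nat)).
  assert (Hdp : forall i, 0 < del i) by (intros; apply sdel_pos; auto).
  exists (mind del p / 2). split; [pose proof (mind_pos del p Hdp); lra|].
  intros h Hh.
  set (D := vsub (vsub (Fmap n p X y lam alpha (vadd z h)) (Fmap n p X y lam alpha z))
                 (mv (2 * p) (Hmat n p X lam alpha (vadd z h)) h)).
  assert (HD : norm2 (2 * p) D = 0).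
  { rewrite norm2_nsq, nsq_split.
    rewrite (nsq_ext p D (fun _ => 0)), (nsq_ext p (fun i => D (p + i)%nat) (fun _ => 0)).
    - unfold nsq. rewrite rsum_zero by (intros; simpl; ring). rewrite Rplus_0_r. apply sqrt_0.
    - intros i Hi. unfold D, vsub. rewrite Hv_bot by auto. unfold Fmap.
      rewrite ltb_f. cbv zeta. rewrite sub_pp, mv_add. unfold vadd. ring.
    - intros i Hi. unfold D, vsub. rewrite Hv_top by auto. unfold Fmap.
      rewrite (ltb_t i p Hi).
      assert (Hsm : Rabs (z i + h i + (z (p + i)%nat + h (p + i)%nat) - (z i + z (p + i)%nat)) < del i).
      { replace (z i + h i + (z (p + i)%nat + h (p + i)%nat) - (z i + z (p + i)%nat))
          with (h i + h (p + i)%nat) by ring.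
        eapply Rle_lt_trans; [apply Rabs_triang|].
        pose proof (comp_le (2 * p) h i ltac:(lia)).
        pose proof (comp_le (2 * p) h (p + i)%nat ltac:(lia)).
        pose proof (mind_le del p i Hi). lra. }
      pose proof (soft_loc lam _ _ Hl Hsm) as Hs.
      unfold actv, vadd. 
      destruct (Rle_dec lam (Rabs (z i + h i + (z (p + i)%nat + h (p + i)%nat)))); lra. }
  rewrite HD. pose proof (norm2_nonneg (2 * p) h). nra.
Qed.

Lemma mv_mm k A B x i : mv k A (mv k B x) i = mv k (mm k A B) x i.
Proof.
  unfold mv, mm.
  rewrite (rsum_ext k _ (fun j => rsum k (fun l => A i j * B j l * x l)))
    by (intros; rewrite <- rsum_scal; apply rsum_ext; intros; ring).
  rewrite rsum_swap. apply rsum_ext. intros l _.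
  rewrite Rmult_comm, <- rsum_scal. apply rsum_ext; intros; ring.
Qed.

From mathcomp Require all_boot all_algebra Rstruct.
Module MC.
Import all_boot all_algebra.
Import Rstruct.
Import GRing.Theory.
Local Open Scope ring_scope.

Lemma rsum_big k (f : nat -> R) : rsum k f = \sum_(i < k) f i.
Proof.
elim: k => [|k IH] /=; first by rewrite big_ord0.
by rewrite big_ord_recr /= IH.
Qed.

Lemma inv_exists k (A : mat) :
  (forall v : vec, (forall i, (i < k)%coq_nat -> mv k A v i = 0) ->
     forall i, (i < k)%coq_nat -> v i = 0) ->
  exists B, is_inverse k A B.
Proof.
move=> Hinj.
case: k Hinj => [|k] Hinj.
  by exists A => i j Hi; exfalso; apply: (Nat.nlt_0_r i).
pose M : 'M[R]_k.+1 := \matrix_(i, j) A i j.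
have Hu : M \in unitmx.
  rewrite -unitmx_tr -row_free_unit -kermx_eq0.
  apply/eqP/row_matrixP => i; rewrite row0.
  set w := row i (kermx M^T).
  have Hw : w *m M^T = 0 by rewrite /w -row_mul mulmx_ker row0.
  pose v : vec := fun l : nat => w 0 (inord l).
  have Hv : forall j, (j < k.+1)%coq_nat -> mv k.+1 A v j = 0.
    move=> j Hj.
    have Hj' : (j < k.+1)%N by apply/ltP.
    rewrite /mv rsum_big.
    have := congr1 (fun m : 'M[R]_(1,k.+1) => m 0 (Ordinal Hj')) Hw.
    rewrite !mxE /= => H; apply: (eq_trans _ H).
    apply: eq_bigr => l _; rewrite /v inord_val mulrC; congr (_ * _); by rewrite !mxE.
  apply/matrixP => a l; rewrite (ord1 a).
  have := Hinj v Hv l (ltP (ltn_ord l)).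
  by rewrite /v inord_val => ->; rewrite mxE.
pose Bi := invmx M.
exists (fun i j => Bi (inord i) (inord j)).
move=> i j Hi Hj.
have Hi' : (i < k.+1)%N by apply/ltP.
have Hj' : (j < k.+1)%N by apply/ltP.
have Hid : idm i j = (1%:M : 'M[R]_k.+1) (inord i) (inord j).
  rewrite mxE /idm.
  case: (PeanoNat.Nat.eqb_spec i j) => [->|Hne]; first by rewrite eqxx.
  case: eqP => // /(congr1 val); rewrite /= !inordK //.
split; rewrite /mm rsum_big Hid.
- rewrite -(mulmxV Hu) mxE; apply: eq_bigr => l _; by rewrite mxE inord_val inordK.
- rewrite -(mulVmx Hu) mxE; apply: eq_bigr => l _; by rewrite mxE inord_val inordK.
Qed.

End MC.

Theorem theorem1 (n p : nat) (X : mat) (y : vec) (lam alpha : R)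
  (hn : (0 < n)%nat) (hlam : lam > 0) (halpha : alpha > 0) :
  (forall z : vec,
     newton_diff (2 * p) (2 * p) (Fmap n p X y lam alpha) (Hmat n p X lam alpha) z)
  /\
  (forall w : vec, exists Hinv : mat,
     is_inverse (2 * p) (Hmat n p X lam alpha w) Hinv /\
     opnorm (2 * p) (2 * p) Hinv
       <= 1 + 2 * (INR n + 1 + alpha + opnorm n p X ^ 2) ^ 2 / alpha).
Proof.
  split.
  - intros z. apply newton; auto.
  - intros w.
    set (C := 1 + 2 * (INR n + 1 + alpha + opnorm n p X ^ 2) ^ 2 / alpha).
    assert (HC : 0 <= C).
    { unfold C. assert (0 <= (INR n + 1 + alpha + opnorm n p X ^ 2) ^ 2 / alpha)
        by (apply Rmult_le_pos; [apply pow2_ge_0 | left; apply Rinv_0_lt_compat; auto]). lra. }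
    assert (Hco : forall v, norm2 (2 * p) v <= C * norm2 (2 * p) (mv (2 * p) (Hmat n p X lam alpha w) v))
      by (intros; apply coercive; auto).
    destruct (MC.inv_exists (2 * p) (Hmat n p X lam alpha w)) as [B HB].
    { intros v Hv i Hi.
      assert (H0 : norm2 (2 * p) (mv (2 * p) (Hmat n p X lam alpha w) v) = 0).
      { rewrite norm2_nsq. unfold nsq. rewrite rsum_zero. apply sqrt_0.
        intros j Hj. rewrite Hv by auto. apply pow_i; lia. }
      pose proof (Hco v) as H1. rewrite H0, Rmult_0_r in H1.
      pose proof (norm2_nonneg (2 * p) v).
      assert (H2 : norm2 (2 * p) v = 0) by lra.
      rewrite norm2_nsq in H2. apply sqrt_eq_0 in H2; [|apply nsq_nonneg].
      apply (nsq_zero _ _ H2); auto. }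
    exists B. split; auto.
    apply opnorm_le. intros x Hx.
    eapply Rle_trans; [apply (Hco (mv (2 * p) B x))|].
    rewrite (norm2_ext (2 * p) _ x).
    + rewrite <- (Rmult_1_r C) at 2. apply Rmult_le_compat_l; auto.
    + intros i Hi. rewrite mv_mm. unfold mv.
      rewrite (rsum_ext (2 * p) _ (fun l => idm i l * x l)).
      * apply rsum_idm; auto.
      * intros l Hl. destruct (HB i l Hi Hl) as [E _]. rewrite E. reflexivity.
Qed.
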